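(* Let $(V,\mathcal{F})$ be a set system which is the split graph vertex shelling antimatroid of some split graph with vertex set $V$, and suppose $\mathcal{F}\neq 2^V$. Then there is a unique graph $G=(V,E)$ which is a split graph and whose split graph vertex shelling antimatroid is $(V,\mathcal{F})$.
   Context: A split graph is a finite simple graph whose vertex set can be partitioned into a clique $K$ and an independent set $I$. A vertex is simplicial if its neighbours induce a clique. The split graph vertex shelling antimatroid of a split graph $G$ on $V$ is $(V,\mathcal{F})$ where $F\subseteq V$ is feasible iff there is an ordering $f_1,\dots,f_{|F|}$ of $F$ such that each $f_j$ is simplicial in $G$ minus $\{f_1,\dots,f_{j-1}\}$ (the empty set is feasible); this family does not depend on the choice of the partition. $2^V$ denotes the family of all subsets of $V$. *)

(* Defs.v *)
From mathcomp Require Import all_boot.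
Set Implicit Arguments. Unset Strict Implicit. Unset Printing Implicit Defensive.

Definition is_graph (V : finType) (e : rel V) : Prop :=
  irreflexive e /\ symmetric e.

Definition is_split (V : finType) (e : rel V) : Prop :=
  exists K : {set V},
    (forall x y, x \in K -> y \in K -> x != y -> e x y) /\
    (forall x y, x \notin K -> y \notin K -> ~~ e x y).

Definition simplicial_in (V : finType) (e : rel V) (S : {set V}) (v : V) : Prop :=
  v \notin S /\
  (forall x y, x \notin S -> y \notin S -> e v x -> e v y -> x != y -> e x y).

(* X is feasible: there is an ordering f_1,...,f_k of X (a duplicate-free
   sequence with underlying set X) such that each f_j is simplicial in
   e minus {f_1,...,f_{j-1}}. *)
Definition feasible (V : finType) (e : rel V) (X : {set V}) : Prop :=
  exists s : seq V,
    [/\ uniq s, [set x in s] = X &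
        forall (s1 s2 : seq V) (x : V), s = s1 ++ x :: s2 ->
          simplicial_in e [set y in s1] x].

Definition is_shelling (V : finType) (e : rel V) (F : {set {set V}}) : Prop :=
  forall X : {set V}, X \in F <-> feasible e X.

(* Main.v *)
Require Import Defs.
From mathcomp Require Import all_boot.
From Stdlib Require Import Classical.
Set Implicit Arguments. Unset Strict Implicit. Unset Printing Implicit Defensive.

Definition simpb (V : finType) (e : rel V) (S : {set V}) (v : V) : bool :=
  (v \notin S) && [forall x, [forall y, (x \notin S) ==> (y \notin S) ==> e v x ==> e v y ==> (x != y) ==> e x y]].

Lemma simpP (V : finType) (e : rel V) S v : reflect (simplicial_in e S v) (simpb e S v).
Proof.
apply: (iffP andP) => [[vS /forallP H]|[vS H]]; split=> //.
  move=> x y xS yS exy evy xy; move: (H x) => /forallP /(_ y).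
  by rewrite xS yS exy evy xy.
apply/forallP=> x; apply/forallP=> y; apply/implyP=> xS; apply/implyP=> yS.
apply/implyP=> ex; apply/implyP=> ey; apply/implyP=> xy; exact: H.
Qed.

Definition good (V : finType) (e : rel V) (s : seq V) :=
  forall (s1 s2 : seq V) (x : V), s = s1 ++ x :: s2 -> simplicial_in e [set y in s1] x.

Lemma simp_sub (V : finType) (e : rel V) (S T : {set V}) v :
  simplicial_in e S v -> S \subset T -> v \notin T -> simplicial_in e T v.
Proof.
move=> [_ H] /subsetP sub vT; split=> // x y xT yT; apply: H.
  by apply/negP => /sub; rewrite (negbTE xT).
by apply/negP => /sub; rewrite (negbTE yT).
Qed.

Lemma split_cat (T : eqType) (s t s1 s2 : seq T) x :
  s ++ t = s1 ++ x :: s2 ->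
  (exists u, s = s1 ++ x :: u) \/ (exists t1, s1 = s ++ t1 /\ t = t1 ++ x :: s2).
Proof.
elim: s s1 => [|a s IH] s1 /=; first by move=> E; right; exists s1.
case: s1 => [|b s1] /= [<-].
  by move=> _; left; exists s.
move=> /IH [[u ->]|[t1 [-> ->]]]; first by left; exists u.
by right; exists t1.
Qed.

Lemma good_cat (V : finType) (e : rel V) s t :
  good e s -> uniq (s ++ t) ->
  (forall x, x \in t -> simplicial_in e [set y in s] x) -> good e (s ++ t).
Proof.
move=> gs u H s1 s2 x /[dup] E /split_cat [[w Es]|[t1 [Es1 Et]]].
  exact: gs Es.
have xt : x \in t by rewrite Et mem_cat in_cons eqxx orbT.
apply: (simp_sub (H x xt)).
  by apply/subsetP=> y; rewrite !inE Es1 mem_cat => ->.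
rewrite inE; move: u; rewrite E cat_uniq => /and3P[_ /= /norP[xs1 _] _].
by [].
Qed.

Lemma feasible_of (V : finType) (e : rel V) s :
  uniq s -> good e s -> feasible e [set y in s].
Proof. by move=> u g; exists s; split. Qed.

Lemma set_nil (V : finType) : [set y in ([::] : seq V)] = set0.
Proof. by apply/setP=> y; rewrite !inE. Qed.

Lemma good_enum (V : finType) (e : rel V) (P : {set V}) :
  (forall x, x \in P -> simplicial_in e set0 x) -> good e (enum P).
Proof.
move=> H; rewrite -[enum P]cat0s; apply: good_cat.
- by move=> s1 s2 x; case: s1.
- by rewrite enum_uniq.
by move=> x; rewrite mem_enum set_nil; apply: H.
Qed.

Lemma set_enum (V : finType) (P : {set V}) : [set y in enum P] = P.
Proof. by apply/setP=> y; rewrite inE mem_enum. Qed.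

Lemma feas_set0 (V : finType) (e : rel V) : feasible e set0.
Proof. by rewrite -set_nil; apply: feasible_of => // s1 s2 x; case: s1. Qed.

Lemma transfer (V : finType) (e e' : rel V) S v :
  (forall X, feasible e X <-> feasible e' X) -> feasible e S ->
  simplicial_in e S v -> simplicial_in e' S v.
Proof.
move=> EF [s [us <- gs]] sv.
have vs : v \notin s by case: sv; rewrite inE.
have : feasible e [set y in s ++ [:: v]].
  apply: feasible_of; first by rewrite cat_uniq us /= (negbTE vs).
  apply: good_cat => //; first by rewrite cat_uniq us /= (negbTE vs).
  by move=> x; rewrite inE => /eqP ->.
move=> /EF [t [ut st gt]].
have : v \in t.
  have : v \in [set y in t] by rewrite st inE mem_cat inE eqxx orbT.
  by rewrite inE.
move=> /splitPr Et; case: Et ut st gt => t1 t2 ut st gt.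
have := gt _ _ _ (erefl _); move/simp_sub; apply; last by rewrite inE.
apply/subsetP=> y; rewrite inE => yt1.
have : y \in [set y in t1 ++ v :: t2] by rewrite inE mem_cat yt1.
rewrite st inE mem_cat inE => /orP[]; first by [].
move=> yv; move: ut; rewrite cat_uniq /= => /and3P[_ /norP[vt1 _] _].
move: vt1; rewrite inE in yv; by rewrite -(eqP yv) yt1.
Qed.

Definition clique (V : finType) (e : rel V) (K : {set V}) :=
  forall x y, x \in K -> y \in K -> x != y -> e x y.
Definition indep (V : finType) (e : rel V) (K : {set V}) :=
  forall x y, x \notin K -> y \notin K -> ~~ e x y.

Lemma split_max (V : finType) (e : rel V) : is_graph e -> is_split e ->
  exists K : {set V}, [/\ clique e K, indep e K &
     forall i, i \notin K -> exists2 k, k \in K & ~~ e i k].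
Proof.
move=> [irr sym] [K0 [C0 I0]].
suff H : forall n (K : {set V}), #|V| - #|K| <= n -> clique e K -> indep e K ->
  exists K : {set V}, [/\ clique e K, indep e K &
     forall i, i \notin K -> exists2 k, k \in K & ~~ e i k].
  exact: (H _ K0 (leqnn _) C0 I0).
elim=> [|n IH] K hn CK IK.
  exists K; split=> // i iK; exfalso.
  have : K = [set: V].
    apply/eqP; rewrite eqEcard subsetT cardsT /=.
    by move: hn; rewrite leqn0 subn_eq0.
  by move=> KT; move: iK; rewrite KT inE.
case: (classic (forall i, i \notin K -> exists2 k, k \in K & ~~ e i k)) => H.
  by exists K.
have [i [iK Hi]] : exists i, i \notin K /\ forall k, k \in K -> e i k.
  apply: NNPP => Hn; apply: H => i iK; apply: NNPP => Hk; apply: Hn.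
  exists i; split=> // k kK; apply: NNPP => ek; apply: Hk; exists k => //.
  by apply/negP.
apply: (IH (i |: K)).
- rewrite cardsU1 iK /=. rewrite subnS; move: hn; case: (#|V| - #|K|) => [|m] //=.
- move=> x y; rewrite !in_setU1 => /orP[/eqP->|xK] /orP[/eqP->|yK] xy.
  + by rewrite eqxx in xy.
  + exact: Hi.
  + by rewrite sym; apply: Hi.
  + exact: CK.
- by move=> x y; rewrite !in_setU1 !negb_or => /andP[_ xK] /andP[_ yK]; apply: IK.
Qed.

Lemma simp_of (V : finType) (g : rel V) (S : {set V}) v (P : pred V) :
  v \notin S -> (forall x, x \notin S -> g v x -> P x) ->
  (forall x y, P x -> P y -> x != y -> g x y) -> simplicial_in g S v.
Proof.
move=> vS HP HC; split=> // x y xS yS ex ey xy.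
by apply: HC => //; [apply: HP xS ex | apply: HP yS ey].
Qed.

Lemma clique_or (V : finType) (g : rel V) (Q : pred V) k :
  symmetric g -> (forall x y, Q x -> Q y -> x != y -> g x y) ->
  (forall y, Q y -> y != k -> g k y) ->
  forall x y, Q x || (x == k) -> Q y || (y == k) -> x != y -> g x y.
Proof.
move=> sym HQ Hk x y /orP[qx|/eqP->] /orP[qy|/eqP->] xy.
- exact: HQ.
- by rewrite sym; apply: Hk.
- by apply: Hk; rewrite // eq_sym.
- by rewrite eqxx in xy.
Qed.

Lemma nonsimp_pair (V : finType) (g : rel V) v : ~ simplicial_in g set0 v ->
  exists p q, [/\ g v p, g v q, p != q & ~~ g p q].
Proof.
move=> H; apply: NNPP => Hn; apply: H; split; first by rewrite inE.
move=> x y _ _ ex ey xy; apply: NNPP => /negP nexy; apply: Hn.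
by exists x, y.
Qed.

Lemma set_cat_enum (V : finType) (P Q : {set V}) :
  P :|: Q = [set y in enum P ++ enum Q].
Proof. by apply/setP => y; rewrite !inE mem_cat !mem_enum. Qed.

Lemma uniq_cat_enum (V : finType) (P Q : {set V}) :
  (forall y, y \in Q -> y \notin P) -> uniq (enum P ++ enum Q).
Proof.
move=> H; rewrite cat_uniq !enum_uniq andbT /=; apply/hasPn => y.
by rewrite !mem_enum; apply: H.
Qed.

Lemma main_dir (V : finType) (e e' : rel V) :
  is_graph e -> is_graph e' -> is_split e -> is_split e' ->
  (forall X, feasible e X <-> feasible e' X) ->
  (exists v, ~ simplicial_in e set0 v) -> forall a b, e a b -> e' a b.
Proof.
move=> [irr sym] [irr' sym'] spl [K' [C' I']] EF [n0 Hn0].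
have [K [C I MX]] := split_max (conj irr sym) spl.
have [A defA] : {A : {set V} | A = [set v | simpb e set0 v]} by eexists.
have tr : forall S v, feasible e S ->
    simplicial_in e S v <-> simplicial_in e' S v.
  move=> S v fS; split; first exact: transfer.
  apply: transfer; first by move=> X; split => /EF.
  by apply/EF.
have inA : forall v, (v \in A) <-> simplicial_in e set0 v.
  by move=> v; rewrite defA inE; split => /simpP.
have feasA : forall S : {set V}, S \subset A -> feasible e S.
  move=> S /subsetP sA; rewrite -(set_enum S); apply: feasible_of.
    exact: enum_uniq.
  by apply: good_enum => x /sA /inA.
have neq : forall x y, x \notin A -> y \in A -> x != y.
  by move=> x y xA yA; apply/eqP => exy; move: xA; rewrite exy yA.
have NK : forall v, v \notin A -> v \in K.
  move=> v vA; apply/negPn/negP => vK; move/negP: vA; apply; apply/inA.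
  split; first by rewrite inE.
  move=> x y _ _ ex ey xy; apply: C => //.
    by apply/negPn/negP => xK; move: (I _ _ vK xK); rewrite ex.
  by apply/negPn/negP => yK; move: (I _ _ vK yK); rewrite ey.
have NK' : forall v, v \notin A -> v \in K'.
  move=> v vA; apply/negPn/negP => vK; move/negP: vA; apply; apply/inA.
  apply/(tr _ _ (feas_set0 e)).
  split; first by rewrite inE.
  move=> x y _ _ ex ey xy; apply: C' => //.
    by apply/negPn/negP => xK; move: (I' _ _ vK xK); rewrite ex.
  by apply/negPn/negP => yK; move: (I' _ _ vK yK); rewrite ey.
have AK : forall k i, k \in K -> k \in A -> i \notin K -> ~~ e k i.
  move=> k i kK kA iK; apply/negP=> eki; have [k' k'K nik'] := MX i iK.
  have [_ H] := (inA k).1 kA.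
  have kk' : k != k'.
    by apply/eqP => kk; move: nik'; rewrite -kk sym eki.
  have ik' : i != k'.
    by apply/eqP => ik; move: iK; rewrite ik k'K.
  move: nik'; rewrite (H i k') ?inE //; exact: C.
have L0 : forall n b, n \notin A -> b \in A -> e n b -> ~~ e' n b ->
    forall m, m \notin A -> e m b.
  move=> n b nA bA enb nenb m mA.
  case: (m =P n) => [->//|/eqP mn].
  have fS := feasA _ (subsetDl A [set b]).
  have H' : simplicial_in e' (A :\ b) n.
    apply: (simp_of (P := fun x => x \notin A)).
    - by rewrite !inE (negbTE nA) andbF.
    - move=> x; rewrite !inE negb_and negbK => /orP[/eqP ->|//].
      by rewrite (negbTE nenb).
    - by move=> x y xA yA xy; apply: C' => //; apply: NK'.
  have [_ H] := (tr _ _ fS).2 H'.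
  apply: H => //.
  - by rewrite !inE (negbTE mA) andbF.
  - by rewrite !inE eqxx.
  - by rewrite sym; apply: C => //; apply: NK.
  - exact: neq.
have X' : forall n b k, n \notin A -> b \in A -> e n b -> ~~ e' n b ->
    k \in A -> k != b -> (forall m, m \notin A -> e m k) -> e b k.
  move=> n b k nA bA enb nenb kA kb Hk; apply/negPn/negP => nebk.
  have fS2 := feasA _ (subsetDl A [set b; k]).
  have fS3 := feasA _ (subsetDl A [set k]).
  have Hf : ~ simplicial_in e (A :\: [set b; k]) n.
    move=> [_ H]; move/negP: nebk; apply; apply: H.
    - by rewrite !inE eqxx.
    - by rewrite !inE eqxx orbT.
    - exact: enb.
    - exact: Hk.
    - by rewrite eq_sym.
  have H3 : simplicial_in e' (A :\ k) n.
    apply/(tr _ _ fS3).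
    apply: (simp_of (P := fun x => (x \notin A) || (x == k))).
    - by rewrite !inE (negbTE nA) andbF.
    - move=> x; rewrite !inE negb_and negbK => /orP[->|->] _ //.
      by rewrite orbT.
    - apply: clique_or => //.
        by move=> x y xA yA xy; apply: C => //; apply: NK.
      by move=> y yA _; rewrite sym; apply: Hk.
  apply: Hf; apply/(tr _ _ fS2).
  have [_ H] := H3.
  have k3 : k \notin A :\ k by rewrite !inE eqxx.
  have y3 : forall y, y \notin A -> y \notin A :\ k.
    by move=> y yA; rewrite !inE (negbTE yA) andbF.
  apply: (simp_of (P := fun x => e' n x && ((x \notin A) || (x == k)))).
  - by rewrite !inE (negbTE nA) andbF.
  - move=> x; rewrite !inE negb_and negbK => + ex; rewrite ex /=.
    move=> /orP[|->//].
    move=> /orP[/eqP xb|/eqP ->]; first by move: ex; rewrite xb (negbTE nenb).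
    by rewrite eqxx orbT.
  move=> x y /andP[ex /orP[xA|/eqP xk]] /andP[ey /orP[yA|/eqP yk]] xy.
  - by apply: C' => //; apply: NK'.
  - by rewrite yk sym'; apply: H => //; [apply: y3 | rewrite -yk | rewrite -yk eq_sym].
  - by rewrite xk; apply: H => //; [apply: y3 | rewrite -xk | rewrite -xk].
  - by rewrite xk yk eqxx in xy.
have L1 : forall n b, n \notin A -> b \in A -> b \notin K -> e n b -> e' n b.
  move=> n b nA bA bK enb; apply/negPn/negP => nenb.
  have [k kK nbk] := MX b bK.
  have kA : k \in A.
    apply/negPn/negP => kA; move: nbk; rewrite sym.
    by rewrite (L0 n b nA bA enb nenb k kA).
  have kb : k != b by apply/eqP => kb; move: bK; rewrite -kb kK.
  move: nbk; rewrite (X' n b k nA bA enb nenb kA kb) //.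
  move=> m mA; apply: C => //; first exact: NK.
  exact: neq.
have NA : forall n b, n \notin A -> b \in A -> e n b -> e' n b.
  move=> n b nA bA enb; case bK: (b \in K); last first.
    by apply: L1 => //; rewrite bK.
  apply/negPn/negP => nenb.
  have : ~ simplicial_in e set0 n by move=> /inA nA'; rewrite nA' in nA.
  move=> /nonsimp_pair [p [q [enp enq pq npq]]].
  have [i [iK eni]] : exists i, i \notin K /\ e n i.
    case pK: (p \in K); last by exists p; rewrite pK.
    case qK: (q \in K); last by exists q; rewrite qK.
    by move: npq; rewrite C.
  have iA : i \in A by apply/negPn/negP => iA; rewrite (NK i iA) in iK.
  have nib : ~~ e i b by rewrite sym; apply: AK.
  have ib : i != b by apply/eqP => ib; rewrite ib bK in iK.
  pose M := [set m | (m \notin A) && e m i].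
  pose P1 := A :\: [set i; b].
  pose P2 := (~: A) :\: M.
  have fS : feasible e (P1 :|: P2).
    rewrite set_cat_enum.
    have un : uniq (enum P1 ++ enum P2).
      apply: uniq_cat_enum => y; rewrite !inE => /andP[_ yA].
      by rewrite (negbTE yA) andbF.
    apply: feasible_of => //; apply: good_cat => //.
      by apply: good_enum => x; rewrite !inE => /andP[_] /inA.
    move=> x; rewrite mem_enum set_enum !inE negb_and negbK => /andP[xM xA].
    apply: (simp_of (P := fun x => x \in K)).
    - by rewrite !inE (negbTE xA) andbF.
    - move=> y; rewrite !inE negb_and negbK => /orP[|yA _]; last exact: NK.
      move=> /orP[/eqP -> exi|/eqP -> _ //].
      by move: xM; rewrite (negbTE xA) exi.
    - exact: C.
  have nS : n \notin P1 :|: P2 by rewrite !inE (negbTE nA) eni andbF.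
  have iS : i \notin P1 :|: P2 by rewrite !inE eqxx iA.
  have bS : b \notin P1 :|: P2 by rewrite !inE eqxx orbT bA.
  have : ~ simplicial_in e (P1 :|: P2) n.
    by move=> [_ H]; move/negP: nib; apply; apply: H.
  apply; apply/(tr _ _ fS).
  apply: (simp_of (P := fun x => (x \in M) || (x == i))).
  - exact: nS.
  - move=> x; rewrite !inE !negb_or !negb_and !negbK => /andP[H1 H2] ex.
    case xA: (x \in A).
      move: H1; rewrite xA orbF => /orP[/eqP xi|/eqP xb]; first by rewrite xi eqxx orbT.
      by move: ex; rewrite xb (negbTE nenb).
    by move: H2; rewrite xA /= !orbF negbK => ->.
  - apply: clique_or => //.
      move=> x y; rewrite !inE => /andP[xA _] /andP[yA _] xy.
      by apply: C' => //; apply: NK'.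
    move=> y; rewrite !inE => /andP[yA eyi] _; rewrite sym'.
    by apply: L1 => //; rewrite iK.
have AA : forall a b, a \in A -> b \in A -> e a b -> e' a b.
  have AK2 : forall a b, a \in A -> b \in A -> e a b -> a \in K.
    move=> a b aA bA eab; apply/negPn/negP => aK.
    case bK: (b \in K).
      by move: (AK b a bK bA aK); rewrite sym eab.
    by move: (I a b aK (negbT bK)); rewrite eab.
  move=> a b aA bA eab.
  have aK := AK2 a b aA bA eab.
  have bK : b \in K by apply: (AK2 b a bA aA); rewrite sym.
  have ab : a != b by apply/eqP => ab; move: eab; rewrite ab irr.
  apply/negPn/negP => neab.
  have n0A : n0 \notin A by apply/negP => /inA.
  have fS := feasA _ (subsetDl A [set a; b]).
  have nS : n0 \notin A :\: [set a; b] by rewrite !inE (negbTE n0A) andbF.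
  have H0 : simplicial_in e (A :\: [set a; b]) n0.
    apply: (simp_of (P := fun x => x \in K)) => //.
    move=> y; rewrite !inE negb_and negbK => /orP[|yA _]; last exact: NK.
    by move=> /orP[/eqP -> _|/eqP -> _].
  have [_ H] := (tr _ _ fS).1 H0.
  move/negP: neab; apply; apply: H => //.
  - by rewrite !inE eqxx.
  - by rewrite !inE eqxx orbT.
  - by apply: NA => //; apply: C => //; [apply: NK | apply: neq].
  - by apply: NA => //; apply: C => //; [apply: NK | apply: neq].
move=> a b eab.
case aA: (a \in A); case bA: (b \in A).
- exact: AA.
- by rewrite sym'; apply: NA; rewrite ?bA // sym.
- by apply: NA; rewrite ?aA.
- apply: C'; try by apply: NK'; rewrite ?aA ?bA.
  by apply/eqP => ab; move: eab; rewrite ab irr.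
Qed.

Theorem mainTheorem5 (V : finType) (F : {set {set V}}) :
  (exists e : rel V, [/\ is_graph e, is_split e & is_shelling e F]) ->
  F != [set: {set V}] ->
  exists e : rel V,
    [/\ is_graph e, is_split e & is_shelling e F] /\
    (forall e' : rel V,
        is_graph e' -> is_split e' -> is_shelling e' F -> e' =2 e).
Proof.
move=> [e [ge se she]] FT.
have nonsimp : exists v, ~ simplicial_in e set0 v.
  apply: NNPP => H; move/negP: FT; apply; apply/eqP/setP => X.
  rewrite inE; apply/(she X).
  rewrite -(set_enum X); apply: feasible_of; first exact: enum_uniq.
  apply: good_enum => x _; apply: NNPP => Hx; apply: H; by exists x.
exists e; split; first by split.
move=> e' ge' se' she' x y.
have EF : forall X, feasible e X <-> feasible e' X.
  by move=> X; split => H; [apply/she'/she | apply/she/she'].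
have EF' : forall X, feasible e' X <-> feasible e X.
  by move=> X; split => /EF.
have nonsimp' : exists v, ~ simplicial_in e' set0 v.
  case: nonsimp => v Hv; exists v => H; apply: Hv.
  exact: (transfer EF' (feas_set0 e') H).
apply/idP/idP.
  exact: (main_dir ge' ge se' se EF' nonsimp').
exact: (main_dir ge ge' se se' EF nonsimp).
Qed.
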